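(* Let $(A,\cdot,[\,,\,],\varepsilon)$ be an $F$-manifold color algebra and let $(V,\rho,\mu)$ be a representation of $A$. On the $G$-graded vector space $A\oplus V$ (with $(A\oplus V)_g=A_g\oplus V_g$) define, for homogeneous $x_1+v_1,\,x_2+v_2$ (with $x_i,v_i$ of the same degree as $x_i+v_i$), $$[x_1+v_1,x_2+v_2]_\rho=[x_1,x_2]+\rho(x_1)v_2-\varepsilon(x_1,x_2)\rho(x_2)v_1,$$ $$(x_1+v_1)\cdot_\mu(x_2+v_2)=x_1\cdot x_2+\mu(x_1)v_2+\varepsilon(x_1,x_2)\mu(x_2)v_1,$$ extended bilinearly. Then $(A\oplus V,\cdot_\mu,[\,,\,]_\rho,\varepsilon)$ is an $F$-manifold color algebra.
   Context: $G$ is an abelian group and $\varepsilon:G\times G\to\mathbb K\setminus\{0\}$ is a skew-symmetric bicharacter: $\varepsilon(a,b)\varepsilon(b,a)=1$, $\varepsilon(a,b+c)=\varepsilon(a,b)\varepsilon(a,c)$, $\varepsilon(a+b,c)=\varepsilon(a,c)\varepsilon(b,c)$; $\mathbb K$ is an algebraically closed field of characteristic zero and all spaces are finite-dimensional. For homogeneous elements $x\in A_a,y\in A_b$ one writes $\varepsilon(x,y)$ for $\varepsilon(a,b)$, $\varepsilon(x,y+z)$ for $\varepsilon(a,b+c)$, etc. An $\varepsilon$-commutative associative algebra is a $G$-graded associative algebra $(A,\cdot)$ with $A_a\cdot A_b\subseteq A_{a+b}$ and $x\cdot y=\varepsilon(x,y)y\cdot x$ for homogeneous $x,y$. A Lie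 color algebra is a $G$-graded space $A$ with bilinear $[\,,\,]$ such that $[A_a,A_b]\subseteq A_{a+b}$, $[x,y]=-\varepsilon(x,y)[y,x]$, and $\varepsilon(z,x)[x,[y,z]]+\varepsilon(y,z)[z,[x,y]]+\varepsilon(x,y)[y,[z,x]]=0$ for homogeneous $x,y,z$. An $F$-manifold color algebra is $(A,\cdot,[\,,\,],\varepsilon)$ where $(A,\cdot,\varepsilon)$ is an $\varepsilon$-commutative associative algebra and $(A,[\,,\,],\varepsilon)$ is a Lie color algebra such that for all homogeneous $x,y,z,w$: $P_{x\cdot y}(z,w)=x\cdot P_y(z,w)+\varepsilon(x,y)y\cdot P_x(z,w)$, where $P_x(y,z)=[x,y\cdot z]-[x,y]\cdot z-\varepsilon(x,y)y\cdot[x,z]$. For a $G$-graded space $V$, a representation of the $\varepsilon$-commutative associative algebra $(A,\cdot,\varepsilon)$ is a linear map $\mu:A\to\mathfrak{gl}(V)$ with $\mu(x)V_a\subseteq V_{a+b}$ for $x\in A_b$ and $\mu(x\cdot y)=\mu(x)\mu(y)$; a representation of the Lie color algebra is a linear $\rho:A\to\mathfrak{gl}(V)$ with $\rho(x)V_a\subseteq V_{a+b}$ for $x\in A_b$ and $\rho([x,y])=\rho(x)\rho(y)-\varepsilon(x,y)\rho(y)\rho(x)$. A representation of the $F$-manifold color algebra $A$ is a triple $(V,\rho,\mu)$ where $\rho$ is a representation of the Lie color algebra, $\mu$ a representation of the $\varepsilon$-commutative associative algebra, and for all homogeneous $x_1,x_2,x_3$: $R(x_1\cdot x_2,x_3)=\mu(x_1)R(x_2,x_3)+\varepsilon(x_1,x_2)\mu(x_2)R(x_1,x_3)$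 and $\mu(P_{x_1}(x_2,x_3))=\varepsilon(x_1,x_2+x_3)S(x_2,x_3)\mu(x_1)-\mu(x_1)S(x_2,x_3)$, where $R(x_1,x_2)=\rho(x_1)\mu(x_2)-\varepsilon(x_1,x_2)\mu(x_2)\rho(x_1)-\mu([x_1,x_2])$ and $S(x_1,x_2)=\mu(x_1)\rho(x_2)+\varepsilon(x_1,x_2)\mu(x_2)\rho(x_1)-\rho(x_1\cdot x_2)$. *)

(* Defs.v *)
From HB Require Import structures.
From mathcomp Require Import all_boot all_order all_algebra.
Set Implicit Arguments. Unset Strict Implicit. Unset Printing Implicit Defensive.
Import Order.TTheory GRing.Theory Num.Theory.
Local Open Scope ring_scope.

Definition skew_bicharacter (G : zmodType) (K : fieldType) (eps : G -> G -> K) :=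
  [/\ forall a b, eps a b != 0,
      forall a b, eps a b * eps b a = 1,
      forall a b c, eps a (b + c) = eps a b * eps a c
    & forall a b c, eps (a + b) c = eps a c * eps b c].

Definition graded_space (G : zmodType) (K : fieldType) (V : vectType K)
    (D : G -> {vspace V}) :=
  exists s : seq G,
    [/\ uniq s,
        forall g, g \notin s -> D g = 0%VS,
        (\sum_(g <- s) D g)%VS = fullv
      & directv (\sum_(g <- s) D g)].

Definition bilinear_op (K : fieldType) (V : vectType K) (op : V -> V -> V) :=
  (forall k x y z, op (k *: x + y) z = k *: op x z + op y z) /\
  (forall k x y z, op z (k *: x + y) = k *: op z x + op z y).

Definition graded_op (G : zmodType) (K : fieldType) (V : vectType K)
    (D : G -> {vspace V}) (op : V -> V -> V) :=
  forall a b x y, x \in D a -> y \in D b -> op x y \in D (a + b).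

Definition eps_comm_assoc_alg (G : zmodType) (K : fieldType) (eps : G -> G -> K)
    (A : vectType K) (D : G -> {vspace A}) (mul : A -> A -> A) :=
  [/\ graded_space D, bilinear_op mul, graded_op D mul,
      forall x y z, mul x (mul y z) = mul (mul x y) z
    & forall a b x y, x \in D a -> y \in D b -> mul x y = eps a b *: mul y x].

Definition lie_color_alg (G : zmodType) (K : fieldType) (eps : G -> G -> K)
    (A : vectType K) (D : G -> {vspace A}) (br : A -> A -> A) :=
  [/\ graded_space D, bilinear_op br, graded_op D br,
      forall a b x y, x \in D a -> y \in D b -> br x y = - (eps a b *: br y x)
    & forall a b c x y z, x \in D a -> y \in D b -> z \in D c ->
        eps c a *: br x (br y z) + eps b c *: br z (br x y)
          + eps a b *: br y (br z x) = 0].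

(* P_x(y,z) = [x, y.z] - [x,y].z - eps(x,y) y.[x,z], x of degree a, y of degree b *)
Definition Pop (G : zmodType) (K : fieldType) (eps : G -> G -> K)
    (A : vectType K) (mul br : A -> A -> A) (a b : G) (x y z : A) : A :=
  br x (mul y z) - mul (br x y) z - eps a b *: mul y (br x z).

Definition F_manifold_color_alg (G : zmodType) (K : fieldType) (eps : G -> G -> K)
    (A : vectType K) (D : G -> {vspace A}) (mul br : A -> A -> A) :=
  [/\ eps_comm_assoc_alg eps D mul, lie_color_alg eps D br
    & forall a b c x y z w, x \in D a -> y \in D b -> z \in D c ->
        Pop eps mul br (a + b) c (mul x y) z w
        = mul x (Pop eps mul br b c y z w) + eps a b *: mul y (Pop eps mul br a c x z w)].

Definition Rop (G : zmodType) (K : fieldType) (eps : G -> G -> K)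
    (A V : vectType K) (br : A -> A -> A) (rho mu : A -> V -> V)
    (a1 a2 : G) (x1 x2 : A) (v : V) : V :=
  rho x1 (mu x2 v) - eps a1 a2 *: mu x2 (rho x1 v) - mu (br x1 x2) v.

Definition Sop (G : zmodType) (K : fieldType) (eps : G -> G -> K)
    (A V : vectType K) (mul : A -> A -> A) (rho mu : A -> V -> V)
    (a1 a2 : G) (x1 x2 : A) (v : V) : V :=
  mu x1 (rho x2 v) + eps a1 a2 *: mu x2 (rho x1 v) - rho (mul x1 x2) v.

Definition graded_linear_action (G : zmodType) (K : fieldType) (A V : vectType K)
    (DA : G -> {vspace A}) (DV : G -> {vspace V}) (rep : A -> V -> V) :=
  [/\ forall k x y v, rep (k *: x + y) v = k *: rep x v + rep y v,
      forall x k v w, rep x (k *: v + w) = k *: rep x v + rep x w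
    & forall a b x v, x \in DA b -> v \in DV a -> rep x v \in DV (a + b)].

Definition assoc_rep (G : zmodType) (K : fieldType) (A V : vectType K)
    (DA : G -> {vspace A}) (DV : G -> {vspace V}) (mul : A -> A -> A)
    (mu : A -> V -> V) :=
  graded_linear_action DA DV mu /\ forall x y v, mu (mul x y) v = mu x (mu y v).

Definition lie_rep (G : zmodType) (K : fieldType) (eps : G -> G -> K)
    (A V : vectType K) (DA : G -> {vspace A}) (DV : G -> {vspace V})
    (br : A -> A -> A) (rho : A -> V -> V) :=
  graded_linear_action DA DV rho /\
  forall a b x y v, x \in DA a -> y \in DA b ->
    rho (br x y) v = rho x (rho y v) - eps a b *: rho y (rho x v).

Definition F_manifold_rep (G : zmodType) (K : fieldType) (eps : G -> G -> K)
    (A V : vectType K) (DA : G -> {vspace A}) (DV : G -> {vspace V})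
    (mul br : A -> A -> A) (rho mu : A -> V -> V) :=
  [/\ graded_space DV, lie_rep eps DA DV br rho, assoc_rep DA DV mul mu,
      forall a1 a2 a3 x1 x2 x3 v, x1 \in DA a1 -> x2 \in DA a2 -> x3 \in DA a3 ->
        Rop eps br rho mu (a1 + a2) a3 (mul x1 x2) x3 v
        = mu x1 (Rop eps br rho mu a2 a3 x2 x3 v)
          + eps a1 a2 *: mu x2 (Rop eps br rho mu a1 a3 x1 x3 v)
    & forall a1 a2 a3 x1 x2 x3 v, x1 \in DA a1 -> x2 \in DA a2 -> x3 \in DA a3 ->
        mu (Pop eps mul br a1 a2 x1 x2 x3) v
        = eps a1 (a2 + a3) *: Sop eps mul rho mu a2 a3 x2 x3 (mu x1 v)
          - mu x1 (Sop eps mul rho mu a2 a3 x2 x3 v)].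

Definition sum_grading (G : zmodType) (K : fieldType) (A V : vectType K)
    (DA : G -> {vspace A}) (DV : G -> {vspace V}) (g : G) : {vspace (A * V)%type} :=
  (linfun (fun x : A => (x, 0 : V)) @: DA g + linfun (fun v : V => (0 : A, v)) @: DV g)%VS.

(* Main.v *)
Require Import Defs.
From HB Require Import structures.
From mathcomp Require Import all_boot all_order all_algebra.
From mathcomp Require Import ring.
Import GRing.Theory.
Local Open Scope ring_scope.


Section Gen.
Variables (K : fieldType) (U W : lmodType K) (f : U -> W).
Hypothesis Hf : forall k x y, f (k *: x + y) = k *: f x + f y.
Lemma lin0 : f 0 = 0.
Proof. have := Hf 1 0 0; rewrite !scale1r addr0 => H. by apply: (addrI (f 0)); rewrite addr0 -H. Qed.
Lemma linD x y : f (x + y) = f x + f y.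
Proof. by have := Hf 1 x y; rewrite !scale1r. Qed.
Lemma linZ k x : f (k *: x) = k *: f x.
Proof. by rewrite -[k *: x]addr0 Hf lin0 addr0. Qed.
Lemma linN x : f (- x) = - f x.
Proof. by rewrite -scaleN1r linZ scaleN1r. Qed.
Lemma linB x y : f (x - y) = f x - f y.
Proof. by rewrite linD linN. Qed.
End Gen.

Lemma sum_ind (K : fieldType) (vT : vectType K) (I : Type) (r : seq I)
  (U : I -> {vspace vT}) (P : vT -> Prop) :
  P 0 -> (forall x y, P x -> P y -> P (x + y)) -> (forall i x, x \in U i -> P x) ->
  forall x, x \in (\sum_(i <- r) U i)%VS -> P x.
Proof.
move=> P0 PD PU; elim: r => [|i r IH] x.
  by rewrite big_nil memv0 => /eqP->.
by rewrite big_cons => /memv_addP[u Uu [v Vv ->]]; apply: PD; [exact: PU Uu | exact: IH].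
Qed.

Lemma pD (K : fieldType) (A V : vectType K) (x y : A) (u v : V) : (x, u) + (y, v) = (x + y, u + v).
Proof. by []. Qed.

Section Inj.
Variables (K : fieldType) (A V : vectType K).
Lemma pE k (x y : A) (u v : V) : k *: (x, u) + (y, v) = (k *: x + y, k *: u + v).
Proof. by []. Qed.
Definition inlf (x : A) : (A * V)%type := (x, 0).
Definition inrf (v : V) : (A * V)%type := (0, v).
Fact inlf_lin : linear inlf.
Proof. by move=> k x y; rewrite /inlf pE scaler0 addr0. Qed.
Fact inrf_lin : linear inrf.
Proof. by move=> k x y; rewrite /inrf pE scaler0 addr0. Qed.
HB.instance Definition _ := GRing.isLinear.Build K A (A * V)%type _ inlf inlf_lin.
HB.instance Definition _ := GRing.isLinear.Build K V (A * V)%type _ inrf inrf_lin.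
Lemma inlfE x : linfun (fun x : A => (x, 0 : V)) x = (x, 0).
Proof. exact: (lfunE inlf). Qed.
Lemma inrfE v : linfun (fun v : V => (0 : A, v)) v = (0, v).
Proof. exact: (lfunE inrf). Qed.
End Inj.

Lemma memSG (G : zmodType) (K : fieldType) (A V : vectType K)
  (DA : G -> {vspace A}) (DV : G -> {vspace V}) g z :
  reflect (exists x, exists2 v, x \in DA g /\ v \in DV g & z = (x, v))
          (z \in sum_grading DA DV g).
Proof.
apply: (iffP memv_addP).
  move=> [u /memv_imgP[x Hx ->] [w /memv_imgP[v Hv ->] ->]].
  by exists x, v => //; rewrite inlfE inrfE pD addr0 add0r.
move=> [x [v [Hx Hv] ->]].
exists (x, 0); first by rewrite -inlfE memv_img.
exists (0, v); first by rewrite -inrfE memv_img.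
by rewrite pD addr0 add0r.
Qed.

Set Implicit Arguments. Unset Strict Implicit.

Section Op.
Variables (G : zmodType) (K : fieldType).
Variables (A : vectType K) (DA : G -> {vspace A}) (V : vectType K) (DV : G -> {vspace V}).
Hypothesis gA : graded_space DA.
Hypothesis gV : graded_space DV.

Lemma A_ind (P : A -> Prop) : P 0 -> (forall x y, P x -> P y -> P (x + y)) ->
  (forall g x, x \in DA g -> P x) -> forall x, P x.
Proof.
move=> P0 PD PH x; case: gA => s [_ _ Hs _].
by apply: (@sum_ind K A G s DA P) => //; rewrite Hs memvf.
Qed.

Lemma V_ind (P : V -> Prop) : P 0 -> (forall x y, P x -> P y -> P (x + y)) ->
  (forall g x, x \in DV g -> P x) -> forall x, P x.
Proof.
move=> P0 PD PH x; case: gV => s [_ _ Hs _].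
by apply: (@sum_ind K V G s DV P) => //; rewrite Hs memvf.
Qed.

Lemma AV_ind (P : (A * V)%type -> Prop) : P 0 -> (forall x y, P x -> P y -> P (x + y)) ->
  (forall g x, x \in DA g -> P (x, 0)) -> (forall g v, v \in DV g -> P (0, v)) ->
  forall z, P z.
Proof.
move=> P0 PD PA PV [x v].
have -> : (x, v) = (x, 0) + (0, v) by rewrite pD addr0 add0r.
apply: (PD).
  elim/A_ind: x => [|x y Hx Hy|g x Hx]; [exact: P0| |exact: PA Hx].
  have -> : (x + y, 0 : V) = (x, 0) + (y, 0) by rewrite pD addr0.
  by apply: (PD).
elim/V_ind: v => [|u w Hx Hy|g u Hx]; [exact: P0| |exact: PV Hx].
have -> : (0 : A, u + w) = (0, u) + (0, w) by rewrite pD addr0.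
by apply: (PD).
Qed.

Lemma SG_ind g (P : (A * V)%type -> Prop) : (forall x y, P x -> P y -> P (x + y)) ->
  (forall x, x \in DA g -> P (x, 0)) -> (forall v, v \in DV g -> P (0, v)) ->
  forall z, z \in sum_grading DA DV g -> P z.
Proof.
move=> PD PA PV z /memSG[x [v [Hx Hv] ->]].
have -> : (x, v) = (x, 0) + (0, v) by rewrite pD addr0 add0r.
by apply: (PD); [apply: PA | apply: PV].
Qed.

End Op.

Section Op2.
Variables (G : zmodType) (K : fieldType).
Variables (A : vectType K) (DA : G -> {vspace A}) (V : vectType K) (DV : G -> {vspace V}).
Hypothesis gA : graded_space DA.
Hypothesis gV : graded_space DV.
Variables (op : (A * V)%type -> (A * V)%type -> (A * V)%type) (f : A -> A -> A)
  (g h : A -> V -> V) (c : G -> G -> K).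
Hypothesis Hop : bilinear_op op.
Hypothesis Hf : bilinear_op f.
Hypothesis Hg : graded_linear_action DA DV g.
Hypothesis Hh : graded_linear_action DA DV h.
Hypothesis Hhom : forall a b x1 v1 x2 v2, x1 \in DA a -> v1 \in DV a ->
        x2 \in DA b -> v2 \in DV b ->
        op (x1, v1) (x2, v2) = (f x1 x2, g x1 v2 + c a b *: h x2 v1).
#[local] Set Default Proof Using "All".

Let HopL k x y z : op (k *: x + y) z = k *: op x z + op y z. Proof. by case: Hop. Qed.
Let HopR k x y z : op z (k *: x + y) = k *: op z x + op z y. Proof. by case: Hop. Qed.
Let HfL k x y z : f (k *: x + y) z = k *: f x z + f y z. Proof. by case: Hf. Qed.
Let HfR k x y z : f z (k *: x + y) = k *: f z x + f z y. Proof. by case: Hf. Qed.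
Let HgL k x y v : g (k *: x + y) v = k *: g x v + g y v. Proof. by case: Hg. Qed.
Let HgR x k v w : g x (k *: v + w) = k *: g x v + g x w. Proof. by case: Hg. Qed.
Let HhL k x y v : h (k *: x + y) v = k *: h x v + h y v. Proof. by case: Hh. Qed.
Let HhR x k v w : h x (k *: v + w) = k *: h x v + h x w. Proof. by case: Hh. Qed.

Lemma op0l z : op 0 z = 0. Proof. exact: (@lin0 _ _ _ (op^~ z) (fun k x y => HopL k x y z)). Qed.
Lemma op0r z : op z 0 = 0. Proof. exact: (@lin0 _ _ _ (op z) (fun k x y => HopR k x y z)). Qed.
Lemma opDl x y z : op (x + y) z = op x z + op y z.
Proof. exact: (@linD _ _ _ (op^~ z) (fun k x y => HopL k x y z)). Qed.
Lemma opDr x y z : op z (x + y) = op z x + op z y.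
Proof. exact: (@linD _ _ _ (op z) (fun k x y => HopR k x y z)). Qed.
Lemma opZl k x z : op (k *: x) z = k *: op x z.
Proof. exact: (@linZ _ _ _ (op^~ z) (fun k x y => HopL k x y z)). Qed.
Lemma opZr k x z : op z (k *: x) = k *: op z x.
Proof. exact: (@linZ _ _ _ (op z) (fun k x y => HopR k x y z)). Qed.
Lemma opNl x z : op (- x) z = - op x z.
Proof. exact: (@linN _ _ _ (op^~ z) (fun k x y => HopL k x y z)). Qed.
Lemma opNr x z : op z (- x) = - op z x.
Proof. exact: (@linN _ _ _ (op z) (fun k x y => HopR k x y z)). Qed.
Lemma opBl x y z : op (x - y) z = op x z - op y z.
Proof. exact: (@linB _ _ _ (op^~ z) (fun k x y => HopL k x y z)). Qed.
Lemma opBr x y z : op z (x - y) = op z x - op z y.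
Proof. exact: (@linB _ _ _ (op z) (fun k x y => HopR k x y z)). Qed.

Let f0l z : f 0 z = 0. Proof. exact: (@lin0 _ _ _ (f^~ z) (fun k x y => HfL k x y z)). Qed.
Let f0r z : f z 0 = 0. Proof. exact: (@lin0 _ _ _ (f z) (fun k x y => HfR k x y z)). Qed.
Let g0l z : g 0 z = 0. Proof. exact: (@lin0 _ _ _ (g^~ z) (fun k x y => HgL k x y z)). Qed.
Let g0r z : g z 0 = 0. Proof. exact: (@lin0 _ _ _ (g z) (fun k x y => HgR z k x y)). Qed.
Let h0l z : h 0 z = 0. Proof. exact: (@lin0 _ _ _ (h^~ z) (fun k x y => HhL k x y z)). Qed.
Let h0r z : h z 0 = 0. Proof. exact: (@lin0 _ _ _ (h z) (fun k x y => HhR z k x y)). Qed.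
Let gDl x y z : g (x + y) z = g x z + g y z.
Proof. exact: (@linD _ _ _ (g^~ z) (fun k x y => HgL k x y z)). Qed.
Let gDr x y z : g z (x + y) = g z x + g z y.
Proof. exact: (@linD _ _ _ (g z) (fun k x y => HgR z k x y)). Qed.
Let fDl x y z : f (x + y) z = f x z + f y z.
Proof. exact: (@linD _ _ _ (f^~ z) (fun k x y => HfL k x y z)). Qed.
Let fDr x y z : f z (x + y) = f z x + f z y.
Proof. exact: (@linD _ _ _ (f z) (fun k x y => HfR k x y z)). Qed.

Lemma opAA a b x y : x \in DA a -> y \in DA b -> op (x, 0) (y, 0) = (f x y, 0).
Proof. by move=> Hx Hy; rewrite (Hhom Hx (mem0v _) Hy (mem0v _)) g0r h0r scaler0 addr0. Qed.
Lemma opAV a b x w : x \in DA a -> w \in DV b -> op (x, 0) (0, w) = (0, g x w).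
Proof. by move=> Hx Hw; rewrite (Hhom Hx (mem0v _) (mem0v _) Hw) f0r h0l scaler0 addr0. Qed.
Lemma opVA a b v y : v \in DV a -> y \in DA b -> op (0, v) (y, 0) = (0, c a b *: h y v).
Proof. by move=> Hv Hy; rewrite (Hhom (mem0v _) Hv Hy (mem0v _)) f0l g0r add0r. Qed.
Lemma opVV a b v w : v \in DV a -> w \in DV b -> op (0, v) (0, w) = 0.
Proof. by move=> Hv Hw; rewrite (Hhom (mem0v _) Hv (mem0v _) Hw) f0l g0l h0l scaler0 addr0. Qed.

Lemma pairD1 (x y : A) : (x + y, 0 : V) = (x, 0) + (y, 0).
Proof. by rewrite pD addr0. Qed.
Lemma pairD2 (x y : V) : (0 : A, x + y) = (0, x) + (0, y).
Proof. by rewrite pD addr0. Qed.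

Lemma opAA' x y : op (x, 0) (y, 0) = (f x y, 0).
Proof.
elim/(A_ind gA): x => [|x x' Hx Hx'|a x Hx]; first by rewrite f0l op0l.
  by rewrite pairD1 opDl Hx Hx' fDl pairD1.
elim/(A_ind gA): y => [|y y' Hy Hy'|b y Hy]; first by rewrite f0r op0r.
  by rewrite pairD1 opDr Hy Hy' fDr pairD1.
exact: opAA Hx Hy.
Qed.

Lemma opAV' x w : op (x, 0) (0, w) = (0, g x w).
Proof.
elim/(A_ind gA): x => [|x x' Hx Hx'|a x Hx]; first by rewrite g0l op0l.
  by rewrite pairD1 opDl Hx Hx' gDl pairD2.
elim/(V_ind gV): w => [|y y' Hy Hy'|b y Hy]; first by rewrite g0r op0r.
  by rewrite pairD2 opDr Hy Hy' gDr pairD2.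
exact: opAV Hx Hy.
Qed.

Lemma opVV' v w : op (0, v) (0, w) = 0.
Proof.
elim/(V_ind gV): v => [|x x' Hx Hx'|a x Hx]; first by rewrite op0l.
  by rewrite pairD2 opDl Hx Hx' addr0.
elim/(V_ind gV): w => [|y y' Hy Hy'|b y Hy]; first by rewrite op0r.
  by rewrite pairD2 opDr Hy Hy' addr0.
exact: opVV Hx Hy.
Qed.

Lemma opVA'fst v y : (op (0, v) (y, 0)).1 = 0.
Proof.
elim/(V_ind gV): v => [|x x' Hx Hx'|a x Hx]; first by rewrite op0l.
  by rewrite pairD2 opDl /= -[LHS]/((op (0, x) (y, 0)).1 + (op (0, x') (y, 0)).1) Hx Hx' addr0.
elim/(A_ind gA): y => [|y y' Hy Hy'|b y Hy]; first by rewrite op0r.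
  by rewrite pairD1 opDr -[LHS]/((op (0, x) (y, 0)).1 + (op (0, x) (y', 0)).1) Hy Hy' addr0.
by rewrite (opVA Hx Hy).
Qed.

Lemma fstD (z z' : (A * V)%type) : (z + z').1 = z.1 + z'.1. Proof. by []. Qed.

Lemma N1 z z' : z.1 = 0 -> z'.1 = 0 -> op z z' = 0.
Proof. by case: z => x v; case: z' => y w /= -> ->; rewrite opVV'. Qed.

Lemma N2l z z' : z.1 = 0 -> (op z z').1 = 0.
Proof.
case: z => x v /= ->; case: z' => y w.
by rewrite -[w]add0r -[y]addr0 -pD opDr fstD opVA'fst opVV' addr0.
Qed.

Lemma N2r z z' : z'.1 = 0 -> (op z z').1 = 0.
Proof.
case: z' => x v /= ->; case: z => y w.
by rewrite -[w]add0r -[y]addr0 -pD opDl fstD opAV' opVV' addr0.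
Qed.

Lemma op_grad (Hfg : graded_op DA f) a b x y : x \in sum_grading DA DV a -> y \in sum_grading DA DV b ->
  op x y \in sum_grading DA DV (a + b).
Proof.
move=> /memSG[x1 [v1 [Hx1 Hv1] ->]] /memSG[x2 [v2 [Hx2 Hv2] ->]].
rewrite (Hhom Hx1 Hv1 Hx2 Hv2); apply/memSG; exists (f x1 x2), (g x1 v2 + c a b *: h x2 v1) => //.
case: Hg Hh => _ _ Gg [_ _ Gh]; split.
  exact: Hfg.
by rewrite memvD // ?memvZ ?Gh // addrC Gg.
Qed.
End Op2.


Lemma sub_sum_seq (K : fieldType) (vT : vectType K) (I : eqType) (r : seq I)
  (U : I -> {vspace vT}) i : i \in r -> (U i <= \sum_(j <- r) U j)%VS.
Proof.
elim: r => [//|j r IH]; rewrite inE big_cons => /orP[/eqP->|/IH H].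
  exact: addvSl.
exact: subv_trans H (addvSr _ _).
Qed.

Lemma sum_sub_seq (I : eqType) (r r' : seq I) (F : I -> nat) :
  uniq r -> uniq r' -> {subset r' <= r} -> (forall i, i \notin r' -> F i = 0%N) ->
  (\sum_(i <- r) F i = \sum_(i <- r') F i)%N.
Proof.
move=> ur ur' sub F0.
rewrite (bigID (fun i => i \in r')) /= [X in (_ + X)%N]big1 ?addn0; last by move=> i /F0.
rewrite -big_filter; apply: perm_big; apply: uniq_perm => //; first exact: filter_uniq.
by move=> i; rewrite mem_filter; apply/andP/idP => [[]//|H]; split=> //; apply: sub.
Qed.

Lemma dim_add_le (K : fieldType) (vT : vectType K) (U W : {vspace vT}) :
  (\dim (U + W) <= \dim U + \dim W)%N.
Proof. by rewrite -dimv_sum_cap leq_addr. Qed.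

Section SG.
Variables (G : zmodType) (K : fieldType).
Variables (A : vectType K) (DA : G -> {vspace A}) (V : vectType K) (DV : G -> {vspace V}).
Hypothesis gA : graded_space DA.
Hypothesis gV : graded_space DV.

Lemma SG_graded : graded_space (sum_grading DA DV).
Proof.
have gA' := gA; have gV' := gV.
case: gA' => sA [uA zA fA dA]; case: gV' => sV [uV zV fV dV].
set s := undup (sA ++ sV).
have HsA g : g \in sA -> g \in s by rewrite mem_undup mem_cat => ->.
have HsV g : g \in sV -> g \in s by rewrite mem_undup mem_cat orbC => ->.
have full : (\sum_(g <- s) sum_grading DA DV g)%VS = fullv.
  apply/eqP; rewrite eqEsubv subvf /=; apply/subvP => z _.
  elim/(AV_ind gA gV): z => [|x y Hx Hy|g x Hx|g v Hv]; first exact: mem0v.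
  - exact: memvD.
  - have [gs|gns] := boolP (g \in sA).
      apply: (subvP (sub_sum_seq _ (HsA _ gs))); apply/memSG; exists x, 0 => //.
      by split=> //; exact: mem0v.
    by move: Hx; rewrite zA // memv0 => /eqP->; exact: mem0v.
  - have [gs|gns] := boolP (g \in sV).
      apply: (subvP (sub_sum_seq _ (HsV _ gs))); apply/memSG; exists 0, v => //.
      by split=> //; exact: mem0v.
    by move: Hv; rewrite zV // memv0 => /eqP->; exact: mem0v.
exists s; split => //.
- exact: undup_uniq.
- move=> g; rewrite mem_undup mem_cat negb_or => /andP[nA nV].
  by rewrite /sum_grading zA // zV // !limg0 addv0.
rewrite directvE /= full dimvf.
move: dA dV; rewrite !directvE /= fA fV !dimvf => /eqP dA /eqP dV.
rewrite eqn_leq; apply/andP; split.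
  by rewrite -dimvf -full dimv_leq_sum.
have dimSG g : (\dim (sum_grading DA DV g) <= \dim (DA g) + \dim (DV g))%N.
  rewrite /sum_grading; apply: leq_trans (dim_add_le _ _) _.
  apply: leq_add.
    by rewrite -(limg_ker_dim (linfun (fun x : A => (x, 0 : V))) (DA g)) leq_addl.
  by rewrite -(limg_ker_dim (linfun (fun v : V => (0 : A, v))) (DV g)) leq_addl.
apply: (@leq_trans (\sum_(g <- s) (\dim (DA g) + \dim (DV g)))%N); first by apply: leq_sum => g _; exact: dimSG.
rewrite big_split /= (@sum_sub_seq _ s sA) ?(@sum_sub_seq _ s sV) ?undup_uniq //.
- by rewrite /dim /= dA dV.
- by move=> g /zV ->; rewrite dimv0.
- by move=> g /zA ->; rewrite dimv0.
Qed.
End SG.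


Lemma vext (K : fieldType) (V : vectType K) (x y : V) :
  (forall i, coord (vbasis fullv) i x = coord (vbasis fullv) i y) -> x = y.
Proof.
move=> H; rewrite (coord_vbasis (memvf x)) (coord_vbasis (memvf y)).
by apply: eq_bigr => i _; rewrite H.
Qed.

Section Main.
Variables (G : zmodType) (K : fieldType) (eps : G -> G -> K).
Hypothesis Heps : skew_bicharacter eps.
Variables (A : vectType K) (DA : G -> {vspace A}) (mul br : A -> A -> A).
Hypothesis HA : F_manifold_color_alg eps DA mul br.
Variables (V : vectType K) (DV : G -> {vspace V}) (rho mu : A -> V -> V).
Hypothesis HV : F_manifold_rep eps DA DV mul br rho mu.
Variables (br_rho mul_mu : (A * V)%type -> (A * V)%type -> (A * V)%type).
Hypotheses (Hbr_bil : bilinear_op br_rho) (Hmul_bil : bilinear_op mul_mu).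
Hypothesis Hbr_hom : forall a b x1 v1 x2 v2, x1 \in DA a -> v1 \in DV a ->
        x2 \in DA b -> v2 \in DV b ->
        br_rho (x1, v1) (x2, v2) = (br x1 x2, rho x1 v2 - eps a b *: rho x2 v1).
Hypothesis Hmul_hom : forall a b x1 v1 x2 v2, x1 \in DA a -> v1 \in DV a ->
        x2 \in DA b -> v2 \in DV b ->
        mul_mu (x1, v1) (x2, v2) = (mul x1 x2, mu x1 v2 + eps a b *: mu x2 v1).

Lemma eM1 a b : eps a b * eps b a = 1. Proof. by case: Heps. Qed.
Lemma eDr a b c : eps a (b + c) = eps a b * eps a c. Proof. by case: Heps. Qed.
Lemma eDl a b c : eps (a + b) c = eps a c * eps b c. Proof. by case: Heps. Qed.

Lemma gA : graded_space DA. Proof. by case: HA => [[]]. Qed.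
Lemma mul_bil : bilinear_op mul. Proof. by case: HA => [[]]. Qed.
Lemma mul_grad : graded_op DA mul. Proof. by case: HA => [[]]. Qed.
Lemma mul_assoc x y z : mul x (mul y z) = mul (mul x y) z. Proof. by case: HA => [[]]. Qed.
Lemma mul_comm a b x y : x \in DA a -> y \in DA b -> mul x y = eps a b *: mul y x.
Proof. by case: HA => [[_ _ _ _ H] _ _]; apply: H. Qed.
Lemma br_bil : bilinear_op br. Proof. by case: HA => [_ []]. Qed.
Lemma br_grad : graded_op DA br. Proof. by case: HA => [_ []]. Qed.
Lemma br_skew a b x y : x \in DA a -> y \in DA b -> br x y = - (eps a b *: br y x).
Proof. by case: HA => [_ [_ _ _ H _] _]; apply: H. Qed.
Lemma br_jac a b c x y z : x \in DA a -> y \in DA b -> z \in DA c ->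
        eps c a *: br x (br y z) + eps b c *: br z (br x y)
          + eps a b *: br y (br z x) = 0.
Proof. by case: HA => [_ [_ _ _ _ H] _]; apply: H. Qed.
Lemma Fcond a b c x y z w : x \in DA a -> y \in DA b -> z \in DA c ->
        Pop eps mul br (a + b) c (mul x y) z w
        = mul x (Pop eps mul br b c y z w) + eps a b *: mul y (Pop eps mul br a c x z w).
Proof. by case: HA => [_ _ H]; apply: H. Qed.

Lemma gV : graded_space DV. Proof. by case: HV. Qed.
Lemma rhoGLA : graded_linear_action DA DV rho. Proof. by case: HV => [_ [] ]. Qed.
Lemma muGLA : graded_linear_action DA DV mu. Proof. by case: HV => [_ _ [] ]. Qed.
Lemma rho_br a b x y v : x \in DA a -> y \in DA b ->
    rho (br x y) v = rho x (rho y v) - eps a b *: rho y (rho x v).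
Proof. by case: HV => [_ [_ H] _ _ _]; apply: H. Qed.
Lemma mu_mul x y v : mu (mul x y) v = mu x (mu y v). Proof. by case: HV => [_ _ [_ H] _ _]. Qed.
Lemma Rax a1 a2 a3 x1 x2 x3 v : x1 \in DA a1 -> x2 \in DA a2 -> x3 \in DA a3 ->
        Rop eps br rho mu (a1 + a2) a3 (mul x1 x2) x3 v
        = mu x1 (Rop eps br rho mu a2 a3 x2 x3 v)
          + eps a1 a2 *: mu x2 (Rop eps br rho mu a1 a3 x1 x3 v).
Proof. by case: HV => [_ _ _ H _]; apply: H. Qed.
Lemma Pax a1 a2 a3 x1 x2 x3 v : x1 \in DA a1 -> x2 \in DA a2 -> x3 \in DA a3 ->
        mu (Pop eps mul br a1 a2 x1 x2 x3) v
        = eps a1 (a2 + a3) *: Sop eps mul rho mu a2 a3 x2 x3 (mu x1 v)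
          - mu x1 (Sop eps mul rho mu a2 a3 x2 x3 v).
Proof. by case: HV => [_ _ _ _ H]; apply: H. Qed.

Lemma Hbr_hom' a b x1 v1 x2 v2 : x1 \in DA a -> v1 \in DV a ->
        x2 \in DA b -> v2 \in DV b ->
        br_rho (x1, v1) (x2, v2) = (br x1 x2, rho x1 v2 + (fun a b => - eps a b) a b *: rho x2 v1).
Proof. by move=> *; rewrite scaleNr; apply: Hbr_hom. Qed.

Lemma rho_lin x : forall k v w, rho x (k *: v + w) = k *: rho x v + rho x w.
Proof. by case: rhoGLA => _ H _ k v w; apply: H. Qed.
Lemma rho_linl v : forall k x y, rho (k *: x + y) v = k *: rho x v + rho y v.
Proof. by case: rhoGLA => H _ _ k x y; apply: H. Qed.
Lemma mu_lin x : forall k v w, mu x (k *: v + w) = k *: mu x v + mu x w.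
Proof. by case: muGLA => _ H _ k v w; apply: H. Qed.
Lemma mu_linl v : forall k x y, mu (k *: x + y) v = k *: mu x v + mu y v.
Proof. by case: muGLA => H _ _ k x y; apply: H. Qed.
Lemma rhoG a b x v : x \in DA b -> v \in DV a -> rho x v \in DV (a + b).
Proof. by case: rhoGLA => _ _ H; apply: H. Qed.
Lemma muG a b x v : x \in DA b -> v \in DV a -> mu x v \in DV (a + b).
Proof. by case: muGLA => _ _ H; apply: H. Qed.

Lemma rhoZ x k v : rho x (k *: v) = k *: rho x v. Proof. exact: (@linZ _ _ _ (rho x) (rho_lin x)). Qed.
Lemma rhoD x v w : rho x (v + w) = rho x v + rho x w. Proof. exact: (@linD _ _ _ (rho x) (rho_lin x)). Qed.
Lemma rhoB x v w : rho x (v - w) = rho x v - rho x w. Proof. exact: (@linB _ _ _ (rho x) (rho_lin x)). Qed.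
Lemma rhoN x v : rho x (- v) = - rho x v. Proof. exact: (@linN _ _ _ (rho x) (rho_lin x)). Qed.
Lemma muZ x k v : mu x (k *: v) = k *: mu x v. Proof. exact: (@linZ _ _ _ (mu x) (mu_lin x)). Qed.
Lemma muD x v w : mu x (v + w) = mu x v + mu x w. Proof. exact: (@linD _ _ _ (mu x) (mu_lin x)). Qed.
Lemma muB x v w : mu x (v - w) = mu x v - mu x w. Proof. exact: (@linB _ _ _ (mu x) (mu_lin x)). Qed.
Lemma muN x v : mu x (- v) = - mu x v. Proof. exact: (@linN _ _ _ (mu x) (mu_lin x)). Qed.
Lemma muZl v k x : mu (k *: x) v = k *: mu x v. Proof. exact: (@linZ _ _ _ (mu^~ v) (mu_linl v)). Qed.
Lemma mulZl z k x : mul (k *: x) z = k *: mul x z.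
Proof. by case: mul_bil => H _; exact: (@linZ _ _ _ (mul^~ z) (fun k x y => H k x y z)). Qed.
Lemma mulZr z k x : mul z (k *: x) = k *: mul z x.
Proof. by case: mul_bil => _ H; exact: (@linZ _ _ _ (mul z) (fun k x y => H k x y z)). Qed.
Lemma brZr z k x : br z (k *: x) = k *: br z x.
Proof. by case: br_bil => _ H; exact: (@linZ _ _ _ (br z) (fun k x y => H k x y z)). Qed.
Lemma brZl z k x : br (k *: x) z = k *: br x z.
Proof. by case: br_bil => H _; exact: (@linZ _ _ _ (br^~ z) (fun k x y => H k x y z)). Qed.
Lemma brNl z x : br (- x) z = - br x z.
Proof. by case: br_bil => H _; exact: (@linN _ _ _ (br^~ z) (fun k x y => H k x y z)). Qed.

Definition mAV' := opAV' gA gV Hmul_bil mul_bil muGLA muGLA Hmul_hom.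
Definition mAA' := opAA' gA gV Hmul_bil mul_bil muGLA muGLA Hmul_hom.
Definition mVV' := opVV' gA gV Hmul_bil mul_bil muGLA muGLA Hmul_hom.
Definition mVA := opVA gA gV Hmul_bil mul_bil muGLA muGLA Hmul_hom.
Definition mN1 := N1 gA gV Hmul_bil mul_bil muGLA muGLA Hmul_hom.
Definition mN2l := N2l gA gV Hmul_bil mul_bil muGLA muGLA Hmul_hom.
Definition mN2r := N2r gA gV Hmul_bil mul_bil muGLA muGLA Hmul_hom.
Definition bAV' := opAV' gA gV Hbr_bil br_bil rhoGLA rhoGLA Hbr_hom'.
Definition bAA' := opAA' gA gV Hbr_bil br_bil rhoGLA rhoGLA Hbr_hom'.
Definition bVV' := opVV' gA gV Hbr_bil br_bil rhoGLA rhoGLA Hbr_hom'.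
Definition bVA := opVA gA gV Hbr_bil br_bil rhoGLA rhoGLA Hbr_hom'.
Definition bN1 := N1 gA gV Hbr_bil br_bil rhoGLA rhoGLA Hbr_hom'.
Definition bN2l := N2l gA gV Hbr_bil br_bil rhoGLA rhoGLA Hbr_hom'.
Definition bN2r := N2r gA gV Hbr_bil br_bil rhoGLA rhoGLA Hbr_hom'.
Definition m0l := op0l gA gV Hmul_bil mul_bil muGLA muGLA Hmul_hom.
Definition m0r := op0r gA gV Hmul_bil mul_bil muGLA muGLA Hmul_hom.
Definition b0l := op0l gA gV Hbr_bil br_bil rhoGLA rhoGLA Hbr_hom'.
Definition b0r := op0r gA gV Hbr_bil br_bil rhoGLA rhoGLA Hbr_hom'.
Definition mDl := opDl gA gV Hmul_bil mul_bil muGLA muGLA Hmul_hom.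
Definition mDr := opDr gA gV Hmul_bil mul_bil muGLA muGLA Hmul_hom.
Definition bDl := opDl gA gV Hbr_bil br_bil rhoGLA rhoGLA Hbr_hom'.
Definition bDr := opDr gA gV Hbr_bil br_bil rhoGLA rhoGLA Hbr_hom'.
Definition mZl := opZl gA gV Hmul_bil mul_bil muGLA muGLA Hmul_hom.
Definition mZr := opZr gA gV Hmul_bil mul_bil muGLA muGLA Hmul_hom.
Definition bZl := opZl gA gV Hbr_bil br_bil rhoGLA rhoGLA Hbr_hom'.
Definition bZr := opZr gA gV Hbr_bil br_bil rhoGLA rhoGLA Hbr_hom'.
Definition mBr := opBr gA gV Hmul_bil mul_bil muGLA muGLA Hmul_hom.
Definition bBr := opBr gA gV Hbr_bil br_bil rhoGLA rhoGLA Hbr_hom'.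
Definition mBl := opBl gA gV Hmul_bil mul_bil muGLA muGLA Hmul_hom.
Definition bBl := opBl gA gV Hbr_bil br_bil rhoGLA rhoGLA Hbr_hom'.


Notation SG := (sum_grading DA DV).
Lemma pZ k (x : A) (v : V) : k *: (x, v) = (k *: x, k *: v). Proof. by []. Qed.
Lemma pN (x : A) (v : V) : - (x, v) = (- x, - v). Proof. by []. Qed.
Lemma pB (x y : A) (u v : V) : (x, u) - (y, v) = (x - y, u - v). Proof. by []. Qed.

Lemma mcomm a b x y : x \in SG a -> y \in SG b -> mul_mu x y = eps a b *: mul_mu y x.
Proof.
move=> /memSG[x1 [v1 [Hx1 Hv1] ->]] /memSG[x2 [v2 [Hx2 Hv2] ->]].
rewrite (Hmul_hom Hx1 Hv1 Hx2 Hv2) (Hmul_hom Hx2 Hv2 Hx1 Hv1) pZ -(mul_comm Hx1 Hx2).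
by rewrite scalerDr scalerA eM1 scale1r addrC.
Qed.

Lemma bskew a b x y : x \in SG a -> y \in SG b -> br_rho x y = - (eps a b *: br_rho y x).
Proof.
move=> /memSG[x1 [v1 [Hx1 Hv1] ->]] /memSG[x2 [v2 [Hx2 Hv2] ->]].
rewrite (Hbr_hom Hx1 Hv1 Hx2 Hv2) (Hbr_hom Hx2 Hv2 Hx1 Hv1) pZ pN -(br_skew Hx1 Hx2).
by rewrite scalerBr scalerA eM1 scale1r opprB.
Qed.

Lemma add4 (p p' q q' : (A * V)%type) : (p + p') + (q + q') = (p + q) + (p' + q').
Proof. exact: addrACA. Qed.

Lemma mu_comm a c x z w : x \in DA a -> z \in DA c -> mu x (mu z w) = eps a c *: mu z (mu x w).
Proof. by move=> Hx Hz; rewrite -!mu_mul (mul_comm Hx Hz) muZl. Qed.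

Lemma assoc_all x y z : mul_mu x (mul_mu y z) = mul_mu (mul_mu x y) z.
Proof.
elim/(AV_ind gA gV): x y z => [|x x' IH IH'|a x Hx|a v Hv] y z.
- by rewrite !m0l.
- by rewrite !mDl IH IH'.
- elim/(AV_ind gA gV): y z => [|y y' IH IH'|b y Hy|b w Hw] z.
  + by rewrite m0l m0r m0l.
  + by rewrite mDl mDr IH IH' mDr mDl.
  + elim/(AV_ind gA gV): z => [|z z' IH IH'|c z Hz|c u Hu].
    * by rewrite !m0r.
    * by rewrite !mDr IH IH'.
    * by rewrite !mAA' mul_assoc.
    * by rewrite mAA' !mAV' mu_mul.
  + elim/(AV_ind gA gV): z => [|z z' IH IH'|c z Hz|c u Hu].
    * by rewrite !m0r.
    * by rewrite !mDr IH IH'.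
    * rewrite (mVA Hw Hz) mAV' mAV' (mVA (muG Hx Hw) Hz).
      by rewrite muZ (mu_comm _ Hx Hz) scalerA eDl.
    * by rewrite mVV' m0r mAV' mVV'.
- elim/(AV_ind gA gV): y z => [|y y' IH IH'|b y Hy|b w Hw] z.
  + by rewrite m0l m0r m0l.
  + by rewrite mDl mDr IH IH' mDr mDl.
  + elim/(AV_ind gA gV): z => [|z z' IH IH'|c z Hz|c u Hu].
    * by rewrite !m0r.
    * by rewrite !mDr IH IH'.
    * rewrite mAA' (mVA Hv (mul_grad Hy Hz)) (mVA Hv Hy) (mVA (memvZ _ (muG Hy Hv)) Hz).
      rewrite mu_mul (mu_comm _ Hy Hz) !muZ !scalerA; congr (_, _ *: _).
      by rewrite eDr eDl; ring.
    * by rewrite mAV' mVV' (mVA Hv Hy) mVV'.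
  + by rewrite mVV' m0l (mN1 (z:=(0,v)) erefl (mN2l (z:=(0,w)) z erefl)).
Qed.

Lemma enz a b : eps a b != 0. Proof. by case: Heps. Qed.
Lemma eV a b : eps b a = (eps a b)^-1.
Proof. by apply: (mulfI (enz a b)); rewrite eM1 divff // enz. Qed.

Lemma pair0 (x : A) (v : V) : x = 0 -> v = 0 -> (x, v) = 0.
Proof. by move=> -> ->. Qed.

Definition J a b c x y z := eps c a *: br_rho x (br_rho y z) + eps b c *: br_rho z (br_rho x y)
  + eps a b *: br_rho y (br_rho z x).

Lemma J_V3 a b c x y w : x \in DA a -> y \in DA b -> w \in DV c -> J a b c (x, 0) (y, 0) (0, w) = 0.
Proof.
move=> Hx Hy Hw; rewrite /J bAV' bAV' bAA' (bVA Hw (br_grad Hx Hy)) (bVA Hw Hx) bAV' /=.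
rewrite !pZ !pD !scaler0 !addr0; apply: pair0 => //.
rewrite (rho_br _ Hx Hy) rhoZ.
apply: vext => i.
rewrite !(linearD, linearZ, linearN, linearB, linear0) /=.
rewrite eDr (eV b c); field; exact: enz.
Qed.

Lemma J_rot a b c x y z : J a b c x y z = J b c a y z x.
Proof. by rewrite /J addrC addrA. Qed.

Lemma J_NN a b c x y z : x.1 = 0 -> y.1 = 0 -> J a b c x y z = 0.
Proof.
move=> Nx Ny; rewrite /J (bN1 Nx (bN2l z Ny)) (bN1 Nx Ny) b0r (bN1 Ny (bN2r z Nx)).
by rewrite !scaler0 !addr0.
Qed.

Lemma add6 (p q r p' q' r' : (A * V)%type) :
  (p + p') + (q + q') + (r + r') = (p + q + r) + (p' + q' + r').
Proof. by rewrite (addrACA p) (addrACA (p + q)). Qed.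

Lemma JDx a b c x x' y z : J a b c (x + x') y z = J a b c x y z + J a b c x' y z.
Proof. by rewrite /J !bDl !bDr !scalerDr add6. Qed.

Lemma J0 a b c y z : J a b c 0 y z = 0.
Proof. by rewrite /J b0l b0l b0r b0r !scaler0 !addr0. Qed.

Lemma J_AAA a b c x y z : x \in DA a -> y \in DA b -> z \in DA c -> J a b c (x, 0) (y, 0) (z, 0) = 0.
Proof.
move=> Hx Hy Hz; rewrite /J !bAA' !pZ !pD !scaler0 !addr0.
by apply: pair0 => //; apply: br_jac.
Qed.

Definition gen g z := (exists2 x, x \in DA g & z = (x, 0)) \/ (exists2 v, v \in DV g & z = (0, v)).

Lemma gen_SG_ind g (P : (A * V)%type -> Prop) : (forall x y, P x -> P y -> P (x + y)) ->
  (forall z, gen g z -> P z) -> forall z, z \in SG g -> P z.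
Proof.
move=> PD PG; apply: (@SG_ind _ _ _ DA _ DV g P PD) => [x Hx|v Hv]; apply: PG; [left; by exists x|right; by exists v].
Qed.

Lemma gen_AV_ind (P : (A * V)%type -> Prop) : (forall x y, P x -> P y -> P (x + y)) ->
  P 0 -> (forall g z, gen g z -> P z) -> forall z, P z.
Proof.
move=> PD P0 PG; apply: (AV_ind gA gV) => // [g x Hx|g v Hv]; apply: (PG g); [left; by exists x|right; by exists v].
Qed.

Lemma J_gen a b c x y z : gen a x -> gen b y -> gen c z -> J a b c x y z = 0.
Proof.
case=> [[x1 Hx ->]|[v1 Hv ->]]; case=> [[y1 Hy ->]|[v2 Hw ->]]; case=> [[z1 Hz ->]|[v3 Hu ->]].
- exact: J_AAA.
- exact: J_V3.
- by rewrite J_rot J_rot J_V3.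
- by rewrite J_rot J_NN.
- by rewrite J_rot J_V3.
- by rewrite J_rot J_rot J_NN.
- by rewrite J_NN.
- by rewrite J_NN.
Qed.

Lemma J_all a b c x y z : x \in SG a -> y \in SG b -> z \in SG c -> J a b c x y z = 0.
Proof.
move=> Hx Hy Hz; move: x Hx y Hy z Hz.
apply: gen_SG_ind => [x x' IH IH'|x Gx] y Hy z Hz; first by rewrite JDx IH // IH' // addr0.
move: y Hy z Hz; apply: gen_SG_ind => [y y' IH IH'|y Gy] z Hz.
  by rewrite J_rot JDx -J_rot IH // -J_rot IH' // addr0.
move: z Hz; apply: gen_SG_ind => [z z' IH IH'|z Gz].
  by rewrite J_rot J_rot JDx -J_rot -J_rot IH -J_rot -J_rot IH' addr0.
exact: J_gen.
Qed.

Notation PopM := (Pop eps mul_mu br_rho).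

Lemma add3s (p p' q q' r r' : (A * V)%type) k :
  (p + p') - (q + q') - k *: (r + r') = (p - q - k *: r) + (p' - q' - k *: r').
Proof. by rewrite scalerDr !opprD (addrACA p) (addrACA (p - q)). Qed.

Lemma PopDl a b x x' y z : PopM a b (x + x') y z = PopM a b x y z + PopM a b x' y z.
Proof. by rewrite /Pop !bDl mDl mDr add3s. Qed.
Lemma PopDm a b x y y' z : PopM a b x (y + y') z = PopM a b x y z + PopM a b x y' z.
Proof. by rewrite /Pop mDl bDr bDr mDl mDl add3s. Qed.
Lemma PopDr a b x y z z' : PopM a b x y (z + z') = PopM a b x y z + PopM a b x y z'.
Proof. by rewrite /Pop mDr bDr mDr bDr mDr add3s. Qed.
Lemma Pop0l a b y z : PopM a b 0 y z = 0.
Proof. by rewrite /Pop !b0l m0l m0r scaler0 !subr0. Qed.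

Lemma fstB3 (p q r : (A * V)%type) k : (p - q - k *: r).1 = p.1 - q.1 - k *: r.1.
Proof. by []. Qed.

Lemma PopN12 a b x y z : x.1 = 0 -> y.1 = 0 -> PopM a b x y z = 0.
Proof.
move=> Nx Ny; rewrite /Pop (bN1 Nx (mN2l z Ny)) (bN1 Nx Ny) m0l (mN1 Ny (bN2l z Nx)).
by rewrite scaler0 !subr0.
Qed.
Lemma PopN13 a b x y z : x.1 = 0 -> z.1 = 0 -> PopM a b x y z = 0.
Proof.
move=> Nx Nz; rewrite /Pop (bN1 Nx (mN2r y Nz)) (mN1 (bN2l y Nx) Nz) (bN1 Nx Nz) m0r.
by rewrite scaler0 !subr0.
Qed.
Lemma PopN23 a b x y z : y.1 = 0 -> z.1 = 0 -> PopM a b x y z = 0.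
Proof.
move=> Ny Nz; rewrite /Pop (mN1 Ny Nz) b0r (mN1 (bN2r x Ny) Nz) (mN1 Ny (bN2r x Nz)).
by rewrite scaler0 !subr0.
Qed.
Lemma PopN1 a b x y z : x.1 = 0 -> (PopM a b x y z).1 = 0.
Proof.
move=> Nx; rewrite /Pop fstB3 (bN2l _ Nx) (mN2l z (bN2l y Nx)) (mN2r y (bN2l z Nx)).
by rewrite scaler0 !subr0.
Qed.
Lemma PopN2 a b x y z : y.1 = 0 -> (PopM a b x y z).1 = 0.
Proof.
move=> Ny; rewrite /Pop fstB3 (bN2r x (mN2l z Ny)) (mN2l z (bN2r x Ny)) (mN2l _ Ny).
by rewrite scaler0 !subr0.
Qed.
Lemma PopN3 a b x y z : z.1 = 0 -> (PopM a b x y z).1 = 0.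
Proof.
move=> Nz; rewrite /Pop fstB3 (bN2r x (mN2r y Nz)) (mN2r _ Nz) (mN2r y (bN2r x Nz)).
by rewrite scaler0 !subr0.
Qed.

Definition LF a b c x y z w := PopM (a + b) c (mul_mu x y) z w.
Definition RF a b c x y z w := mul_mu x (PopM b c y z w) + eps a b *: mul_mu y (PopM a c x z w).

Lemma FZ_xy a b c x y z w : x.1 = 0 -> y.1 = 0 -> LF a b c x y z w = RF a b c x y z w.
Proof.
move=> Nx Ny; rewrite /LF /RF (mN1 Nx Ny) Pop0l.
by rewrite (mN1 Nx (PopN1 _ _ _ _ Ny)) (mN1 Ny (PopN1 _ _ _ _ Nx)) scaler0 addr0.
Qed.
Lemma FZ_xz a b c x y z w : x.1 = 0 -> z.1 = 0 -> LF a b c x y z w = RF a b c x y z w.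
Proof.
move=> Nx Nz; rewrite /LF /RF (PopN12 _ _ _ (mN2l y Nx) Nz).
by rewrite (mN1 Nx (PopN2 _ _ _ _ Nz)) (PopN12 _ _ _ Nx Nz) m0r scaler0 addr0.
Qed.
Lemma FZ_xw a b c x y z w : x.1 = 0 -> w.1 = 0 -> LF a b c x y z w = RF a b c x y z w.
Proof.
move=> Nx Nw; rewrite /LF /RF (PopN13 _ _ _ (mN2l y Nx) Nw).
by rewrite (mN1 Nx (PopN3 _ _ _ _ Nw)) (PopN13 _ _ _ Nx Nw) m0r scaler0 addr0.
Qed.
Lemma FZ_yz a b c x y z w : y.1 = 0 -> z.1 = 0 -> LF a b c x y z w = RF a b c x y z w.
Proof.
move=> Ny Nz; rewrite /LF /RF (PopN12 _ _ _ (mN2r x Ny) Nz).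
by rewrite (PopN12 _ _ _ Ny Nz) m0r (mN1 Ny (PopN2 _ _ _ _ Nz)) scaler0 addr0.
Qed.
Lemma FZ_yw a b c x y z w : y.1 = 0 -> w.1 = 0 -> LF a b c x y z w = RF a b c x y z w.
Proof.
move=> Ny Nw; rewrite /LF /RF (PopN13 _ _ _ (mN2r x Ny) Nw).
by rewrite (PopN13 _ _ _ Ny Nw) m0r (mN1 Ny (PopN3 _ _ _ _ Nw)) scaler0 addr0.
Qed.
Lemma FZ_zw a b c x y z w : z.1 = 0 -> w.1 = 0 -> LF a b c x y z w = RF a b c x y z w.
Proof.
move=> Nz Nw; rewrite /LF /RF (PopN23 _ _ _ Nz Nw).
by rewrite !(PopN23 _ _ _ Nz Nw) !m0r scaler0 addr0.
Qed.

Ltac vsimpl := rewrite ?(muD, muB, muZ, muN, rhoD, rhoB, rhoZ, rhoN).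
Ltac vfin := apply: vext => ?; rewrite !(linearD, linearZ, linearN, linearB) /=.

Lemma PopA_grad a b c x y z : x \in DA a -> y \in DA b -> z \in DA c ->
  Pop eps mul br a b x y z \in DA (a + b + c).
Proof.
move=> Hx Hy Hz; rewrite /Pop; apply: memvB; first apply: memvB.
- by rewrite -addrA; apply: br_grad Hx (mul_grad Hy Hz).
- exact: mul_grad (br_grad Hx Hy) Hz.
- by apply: memvZ; rewrite -addrA addrCA; apply: mul_grad Hy (br_grad Hx Hz).
Qed.

Lemma PopAAA a b x y z : PopM a b (x, 0) (y, 0) (z, 0) = (Pop eps mul br a b x y z, 0).
Proof. by rewrite /Pop !mAA' !bAA' !mAA' pZ !pB scaler0 !subr0. Qed.

Lemma PopAAV a b x y u : PopM a b (x, 0) (y, 0) (0, u) = (0, Rop eps br rho mu a b x y u).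
Proof.
rewrite /Pop mAV' bAV' bAA' mAV' bAV' mAV' pZ !pB scaler0 !subr0.
by rewrite /Rop addrAC.
Qed.

Lemma PopAVA a b d x u w : x \in DA a -> u \in DV b -> w \in DA d ->
  PopM a b (x, 0) (0, u) (w, 0) = (0, eps b d *: Rop eps br rho mu a d x w u).
Proof.
move=> Hx Hu Hw; rewrite /Pop (mVA Hu Hw) !bAV' (mVA (rhoG Hx Hu) Hw) bAA' (mVA Hu (br_grad Hx Hw)).
rewrite pZ !pB scaler0 !subr0; congr (_, _).
rewrite /Rop; vsimpl; vfin.
by rewrite !eDr !eDl (eV a b); field; exact: enz.
Qed.

Lemma PopVAA a b c v y z : v \in DV a -> y \in DA b -> z \in DA c ->
  PopM a b (0, v) (y, 0) (z, 0) = (0, eps a (b + c) *: Sop eps mul rho mu b c y z v).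
Proof.
move=> Hv Hy Hz; rewrite /Pop mAA' (bVA Hv (mul_grad Hy Hz)) (bVA Hv Hy) /=.
rewrite (mVA (memvZ _ (rhoG Hy Hv)) Hz) (bVA Hv Hz) /= mAV'.
rewrite pZ !pB scaler0 !subr0; congr (_, _).
rewrite /Sop; vsimpl; vfin.
rewrite !eDr !eDl; ring.
Qed.

Lemma SopZ b c y z k v : Sop eps mul rho mu b c y z (k *: v) = k *: Sop eps mul rho mu b c y z v.
Proof. by rewrite /Sop; vsimpl; vfin; ring. Qed.

Lemma F_gen a b c d x y z w : gen a x -> gen b y -> gen c z -> gen d w ->
  LF a b c x y z w = RF a b c x y z w.
Proof.
case=> [[x1 Hx ->]|[v1 Hv ->]]; case=> [[y1 Hy ->]|[v2 Hv2 ->]];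
  case=> [[z1 Hz ->]|[v3 Hv3 ->]]; case=> [[w1 Hw ->]|[v4 Hv4 ->]];
  try solve [by apply: FZ_xy | by apply: FZ_xz | by apply: FZ_xw | by apply: FZ_yz
            | by apply: FZ_yw | by apply: FZ_zw].
-
  rewrite /LF /RF mAA' !PopAAA !mAA' pZ pD scaler0 addr0.
  by rewrite (Fcond _ Hx Hy Hz).
-
  rewrite /LF /RF mAA' !PopAAV !mAV' pZ pD scaler0 addr0.
  by rewrite (Rax _ Hx Hy Hz).
-
  rewrite /LF /RF mAA' (PopAVA (mul_grad Hx Hy) Hv3 Hw) (PopAVA Hy Hv3 Hw) (PopAVA Hx Hv3 Hw).
  rewrite !mAV' pZ pD scaler0 addr0 (Rax _ Hx Hy Hw); congr (_, _).
  by vsimpl; vfin; ring.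
-
  have Hxv : mu x1 v2 \in DV (a + b) by rewrite addrC; apply: muG.
  rewrite /LF /RF mAV' (PopVAA Hxv Hz Hw) (PopVAA Hv2 Hz Hw) PopAAA.
  rewrite (mVA Hv2 (PopA_grad Hx Hz Hw)) mAV' pZ pD scaler0 addr0; congr (_, _).
  rewrite (Pax _ Hx Hz Hw); vsimpl; vfin.
  by rewrite !eDr !eDl (eV a b); field; exact: enz.
-
  have Hm : eps a b *: mu y1 v1 \in DV (a + b) by apply: memvZ; apply: muG.
  rewrite /LF /RF (mVA Hv Hy) (PopVAA Hm Hz Hw) PopAAA (PopVAA Hv Hz Hw).
  rewrite (mVA Hv (PopA_grad Hy Hz Hw)) mAV' pZ pD scaler0 addr0; congr (_, _).
  rewrite (Pax _ Hy Hz Hw) SopZ; vsimpl; vfin.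
  by rewrite !eDr !eDl; ring.
Qed.

Lemma Pop0r a b x y : PopM a b x y 0 = 0.
Proof. by rewrite /Pop !m0r !b0r m0r scaler0 !subr0. Qed.

Lemma LFDx a b c x x' y z w : LF a b c (x + x') y z w = LF a b c x y z w + LF a b c x' y z w.
Proof. by rewrite /LF mDl PopDl. Qed.
Lemma LFDy a b c x y y' z w : LF a b c x (y + y') z w = LF a b c x y z w + LF a b c x y' z w.
Proof. by rewrite /LF mDr PopDl. Qed.
Lemma LFDz a b c x y z z' w : LF a b c x y (z + z') w = LF a b c x y z w + LF a b c x y z' w.
Proof. by rewrite /LF PopDm. Qed.
Lemma LFDw a b c x y z w w' : LF a b c x y z (w + w') = LF a b c x y z w + LF a b c x y z w'.
Proof. by rewrite /LF PopDr. Qed.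
Lemma RFDx a b c x x' y z w : RF a b c (x + x') y z w = RF a b c x y z w + RF a b c x' y z w.
Proof. by rewrite /RF mDl PopDl [mul_mu y _]mDr scalerDr addrACA. Qed.
Lemma RFDy a b c x y y' z w : RF a b c x (y + y') z w = RF a b c x y z w + RF a b c x y' z w.
Proof. by rewrite /RF PopDl [mul_mu x _]mDr mDl scalerDr addrACA. Qed.
Lemma RFDz a b c x y z z' w : RF a b c x y (z + z') w = RF a b c x y z w + RF a b c x y z' w.
Proof. by rewrite /RF !PopDm [mul_mu x _]mDr [mul_mu y _]mDr scalerDr addrACA. Qed.
Lemma RFDw a b c x y z w w' : RF a b c x y z (w + w') = RF a b c x y z w + RF a b c x y z w'.
Proof. by rewrite /RF !PopDr [mul_mu x _]mDr [mul_mu y _]mDr scalerDr addrACA. Qed.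

Lemma F_all a b c x y z w : x \in SG a -> y \in SG b -> z \in SG c ->
  LF a b c x y z w = RF a b c x y z w.
Proof.
move=> Hx Hy Hz; move: x Hx y Hy z Hz w.
apply: gen_SG_ind => [x x' IH IH'|x Gx] y Hy z Hz w.
  by rewrite LFDx RFDx IH // IH'.
move: y Hy z Hz w; apply: gen_SG_ind => [y y' IH IH'|y Gy] z Hz w.
  by rewrite LFDy RFDy IH // IH'.
move: z Hz w; apply: gen_SG_ind => [z z' IH IH'|z Gz] w.
  by rewrite LFDz RFDz IH // IH'.
elim/gen_AV_ind: w => [w w' IH IH'||g w Gw].
- by rewrite LFDw RFDw IH IH'.
- by rewrite /LF /RF !Pop0r !m0r scaler0 addr0.
- exact: F_gen Gx Gy Gz Gw.
Qed.

Lemma main_result : F_manifold_color_alg eps SG mul_mu br_rho.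
Proof.
have gSG := SG_graded gA gV.
split.
- split => //.
  + exact: (op_grad gA gV Hmul_bil mul_bil muGLA muGLA Hmul_hom mul_grad).
  + exact: assoc_all.
  + exact: mcomm.
- split => //.
  + exact: (op_grad gA gV Hbr_bil br_bil rhoGLA rhoGLA Hbr_hom' br_grad).
  + exact: bskew.
  + exact: J_all.
- exact: F_all.
Qed.

End Main.
Unset Implicit Arguments. Set Strict Implicit.

Theorem proposition3p5 (G : zmodType) (K : closedFieldType)
    (charK0 : [pchar K] =i pred0)
    (eps : G -> G -> K) (Heps : skew_bicharacter eps)
    (A : vectType K) (DA : G -> {vspace A}) (mul br : A -> A -> A)
    (HA : F_manifold_color_alg eps DA mul br)
    (V : vectType K) (DV : G -> {vspace V}) (rho mu : A -> V -> V)
    (HV : F_manifold_rep eps DA DV mul br rho mu)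
    (br_rho mul_mu : (A * V)%type -> (A * V)%type -> (A * V)%type)
    (Hbr_bil : bilinear_op br_rho) (Hmul_bil : bilinear_op mul_mu)
    (Hbr_hom : forall a b x1 v1 x2 v2, x1 \in DA a -> v1 \in DV a ->
        x2 \in DA b -> v2 \in DV b ->
        br_rho (x1, v1) (x2, v2) = (br x1 x2, rho x1 v2 - eps a b *: rho x2 v1))
    (Hmul_hom : forall a b x1 v1 x2 v2, x1 \in DA a -> v1 \in DV a ->
        x2 \in DA b -> v2 \in DV b ->
        mul_mu (x1, v1) (x2, v2) = (mul x1 x2, mu x1 v2 + eps a b *: mu x2 v1)) :
  F_manifold_color_alg eps (sum_grading DA DV) mul_mu br_rho.
Proof.
exact: (main_result Heps HA HV Hbr_bil Hmul_bil Hbr_hom Hmul_hom).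
Qed.
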